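(* Let $-1\le\alpha\le1$ and $C=1-\log 2$. For every $N\ge1$ and every set $\omega\subset\mathbb{R}\times(-\pi,\pi]$ with $|\omega|=N$, $$\sum_{\substack{z,z'\in\omega\\ z\ne z'}}W_\alpha(z-z')\ \ge\ -N(\log N+C).$$
   Context: For $-1\le\alpha\le1$ and $(x,y)\in\mathbb{R}^2$ with $\cosh x-\cos y>0$, define $$W_\alpha(x,y)=\frac12\left[\frac{\alpha\,x\sinh x}{\cosh x-\cos y}-\log\big(2(\cosh x-\cos y)\big)+(1-\alpha)|x|\right].$$ For distinct $z,z'\in\mathbb{R}\times(-\pi,\pi]$ the difference $z-z'$ lies in the domain of $W_\alpha$. *)

(* Defs.v *)
From Stdlib Require Import Reals List.
Import ListNotations.
Open Scope R_scope.

Definition W (alpha x y : R) : R :=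
  / 2 * (alpha * x * sinh x / (cosh x - cos y)
         - ln (2 * (cosh x - cos y))
         + (1 - alpha) * Rabs x).

Definition Wpt (alpha : R) (z z' : R * R) : R :=
  W alpha (fst z - fst z') (snd z - snd z').

Definition in_strip (z : R * R) : Prop := - PI < snd z /\ snd z <= PI.

Definition pair_sum (alpha : R) (w : list (R * R)) : R :=
  fold_right Rplus 0
    (map (fun z => fold_right Rplus 0
       (map (fun z' => Wpt alpha z z')
          (filter (fun z' => if Req_EM_T (fst z) (fst z') then
                                if Req_EM_T (snd z) (snd z') then false else true
                              else true) w))) w).

(* Main.v *)
Require Import Defs.
From Coquelicot Require Import Coquelicot.
From Stdlib Require Import Reals Lra Lia Psatz List Permutation Arith.
Open Scope R_scope.

Section SumL.
Context {A : Type}.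
Definition sumL (f : A -> R) (l : list A) : R :=
  fold_right (fun a acc => f a + acc) 0 l.

Lemma sumL_nil f : sumL f nil = 0. Proof. reflexivity. Qed.
Lemma sumL_cons f a l : sumL f (a :: l) = f a + sumL f l. Proof. reflexivity. Qed.

Lemma sumL_perm f l l' : Permutation l l' -> sumL f l = sumL f l'.
Proof.
  induction 1; simpl; try lra.
Qed.

Lemma sumL_ext f g l : (forall a, In a l -> f a = g a) -> sumL f l = sumL g l.
Proof.
  induction l as [|a l IH]; intros H; simpl; auto.
  rewrite H by (left; auto). rewrite IH; auto. intros; apply H; right; auto.
Qed.

Lemma sumL_plus f g l : sumL (fun a => f a + g a) l = sumL f l + sumL g l.
Proof. induction l; simpl; [lra|]. fold (sumL f l) (sumL g l) (sumL (fun a => f a + g a) l). lra. Qed.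

Lemma sumL_scal c f l : sumL (fun a => c * f a) l = c * sumL f l.
Proof. induction l; simpl; [lra|]. fold (sumL f l) (sumL (fun a => c * f a) l). rewrite IHl. lra. Qed.

Lemma sumL_opp f l : sumL (fun a => - f a) l = - sumL f l.
Proof. induction l; simpl; [lra|]. fold (sumL f l) (sumL (fun a => - f a) l). rewrite IHl. lra. Qed.

Lemma sumL_le f g l : (forall a, In a l -> f a <= g a) -> sumL f l <= sumL g l.
Proof.
  induction l as [|a l IH]; intros H; simpl; [lra|].
  fold (sumL f l) (sumL g l).
  assert (f a <= g a) by (apply H; left; auto).
  assert (sumL f l <= sumL g l) by (apply IH; intros; apply H; right; auto). lra.
Qed.

Lemma sumL_nonneg f l : (forall a, In a l -> 0 <= f a) -> 0 <= sumL f l.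
Proof.
  intros H. induction l as [|a l IH]; simpl; [lra|].
  fold (sumL f l). assert (0 <= f a) by (apply H; left; auto).
  assert (0 <= sumL f l) by (apply IH; intros; apply H; right; auto). lra.
Qed.

Lemma sumL_const c l : sumL (fun _ => c) l = INR (length l) * c.
Proof. induction l; simpl length; [simpl; lra|]. rewrite S_INR, sumL_cons, IHl. lra. Qed.

Lemma sumL_map f l : fold_right Rplus 0 (map f l) = sumL f l.
Proof. induction l; simpl; auto. rewrite IHl; auto. Qed.
End SumL.

Lemma sumL_swap {A B : Type} (F : A -> B -> R) la lb :
  sumL (fun a => sumL (fun b => F a b) lb) la = sumL (fun b => sumL (fun a => F a b) la) lb.
Proof.
  induction la as [|a la IH].
  - rewrite sumL_nil. induction lb; simpl; auto. simpl in IHlb. rewrite <- IHlb. lra.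
  - rewrite sumL_cons, IH.
    rewrite <- sumL_plus. apply sumL_ext; intros; simpl; auto.
Qed.


Lemma cont_of_ex_derive f x : ex_derive f x -> continuity_pt f x.
Proof. intros H. apply derivable_continuous_pt. apply ex_derive_Reals_0; auto. Qed.

Definition Vq (al S T : R) := S^2 + 2*al*S*T + 2*Rabs al*T^2.

Lemma Vq_nonneg al S T : -1 <= al <= 1 -> 0 <= Vq al S T.
Proof.
  intros H. unfold Vq.
  assert (al^2 <= Rabs al) by (unfold Rabs; destruct Rcase_abs; nra).
  assert (0 <= Rabs al) by apply Rabs_pos.
  assert (0 <= (S + al*T)^2) by apply pow2_ge_0.
  assert (0 <= (2*Rabs al - al^2) * T^2) by (apply Rmult_le_pos; [lra| apply pow2_ge_0]).
  nra.
Qed.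

Lemma decay al S T d : -1 <= al <= 1 -> 0 <= d ->
  Vq al (exp (-d) * S) (exp (-d) * (T + d*S)) <= Vq al S T.
Proof.
  intros Hal Hd.
  set (phi := fun u => exp (-(2*u)) * (S^2 + 2*al*S*(T+u*S) + 2*Rabs al*(T+u*S)^2)).
  assert (E1 : Vq al (exp (-d) * S) (exp (-d) * (T + d*S)) = phi d).
  { unfold phi, Vq. replace (-(2*d)) with (-d + -d) by ring. rewrite exp_plus. ring. }
  assert (E0 : Vq al S T = phi 0).
  { unfold phi, Vq. replace (-(2*0)) with 0 by ring. rewrite exp_0. ring. }
  rewrite E1, E0.
  set (dphi := fun u => exp (-(2*u)) * ((2*al - 2)*S^2 + (4*Rabs al - 4*al)*S*(T+u*S) - 4*Rabs al*(T+u*S)^2)).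
  destruct (MVT_gen phi 0 d dphi) as [c [Hc Heq]].
  - intros x _. unfold phi, dphi. auto_derive; auto. ring.
  - intros x _. apply cont_of_ex_derive. unfold phi. auto_derive; auto.
  - assert (dphi c <= 0).
    { unfold dphi. set (U := T + c*S). assert (0 < exp (-(2*c))) by apply exp_pos.
      assert (Q : (2*al - 2)*S^2 + (4*Rabs al - 4*al)*S*U - 4*Rabs al*U^2 <= 0).
      { assert (0 <= (U - S)^2) by apply pow2_ge_0. assert (0 <= S^2) by apply pow2_ge_0.
        assert (0 <= U^2) by apply pow2_ge_0.
        unfold Rabs; destruct Rcase_abs.
        - replace ((2 * al - 2) * S ^ 2 + (4 * - al - 4 * al) * S * U - 4 * - al * U ^ 2)
            with (4*al*(U-S)^2 - (2 - 2*(-al))*S^2) by ring. nra.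
        - nra. }
      nra. }
    assert (dphi c * (d - 0) <= 0) by nra. lra.
Qed.


Section Core.
Context {A : Type} (tt cc : A -> R) (al : R).
Hypothesis Hal : -1 <= al <= 1.

Definition fk (u : R) := (1 + al*u) * exp (-u).
Definition Qf (L : list A) := sumL (fun a => sumL (fun b => cc a * cc b * fk (Rabs (tt a - tt b))) L) L.
Definition Sf (L : list A) tau := sumL (fun a => cc a * exp (-(tau - tt a))) L.
Definition Tf (L : list A) tau := sumL (fun a => cc a * (tau - tt a) * exp (-(tau - tt a))) L.

Lemma Qf_perm L L' : Permutation L L' -> Qf L = Qf L'.
Proof.
  intros P. unfold Qf. rewrite (sumL_perm _ _ _ P).
  apply sumL_ext. intros a _. apply sumL_perm; auto.
Qed.
Lemma Sf_perm L L' tau : Permutation L L' -> Sf L tau = Sf L' tau.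
Proof. intros P; unfold Sf; apply sumL_perm; auto. Qed.
Lemma Tf_perm L L' tau : Permutation L L' -> Tf L tau = Tf L' tau.
Proof. intros P; unfold Tf; apply sumL_perm; auto. Qed.

Lemma Qf_cons m L : Qf (m :: L) =
  cc m ^ 2 + 2 * cc m * sumL (fun b => cc b * fk (Rabs (tt m - tt b))) L + Qf L.
Proof.
  unfold Qf. rewrite sumL_cons. rewrite sumL_cons.
  assert (E : sumL (fun a => sumL (fun b => cc a * cc b * fk (Rabs (tt a - tt b))) (m :: L)) L
   = sumL (fun a => cc a * cc m * fk (Rabs (tt a - tt m))) L +
     sumL (fun a => sumL (fun b => cc a * cc b * fk (Rabs (tt a - tt b))) L) L).
  { rewrite <- sumL_plus. apply sumL_ext. intros; rewrite sumL_cons; auto. }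
  rewrite E.
  assert (E2 : sumL (fun a => cc a * cc m * fk (Rabs (tt a - tt m))) L =
     cc m * sumL (fun b => cc b * fk (Rabs (tt m - tt b))) L).
  { rewrite <- sumL_scal. apply sumL_ext. intros. rewrite Rabs_minus_sym. ring. }
  assert (E3 : sumL (fun b => cc m * cc b * fk (Rabs (tt m - tt b))) L =
     cc m * sumL (fun b => cc b * fk (Rabs (tt m - tt b))) L).
  { rewrite <- sumL_scal. apply sumL_ext. intros. ring. }
  rewrite E2, E3. unfold fk. rewrite Rminus_diag, Rabs_R0, Ropp_0, exp_0. ring.
Qed.

Lemma Sf_shift L tau d : Sf L (tau + d) = exp (-d) * Sf L tau.
Proof.
  unfold Sf. rewrite <- sumL_scal. apply sumL_ext. intros.
  replace (-(tau + d - tt a)) with (-d + -(tau - tt a)) by ring. rewrite exp_plus. ring.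
Qed.
Lemma Tf_shift L tau d : Tf L (tau + d) = exp (-d) * (Tf L tau + d * Sf L tau).
Proof.
  unfold Tf, Sf. rewrite <- sumL_scal, <- sumL_plus, <- sumL_scal. apply sumL_ext. intros.
  replace (-(tau + d - tt a)) with (-d + -(tau - tt a)) by ring. rewrite exp_plus. ring.
Qed.

Lemma extract_max (L : list A) : L <> nil ->
  exists m rest, Permutation L (m :: rest) /\ forall r, In r rest -> tt r <= tt m.
Proof.
  induction L as [|a L IH]; intros H; [congruence|].
  destruct L as [|b L'].
  - exists a, nil. split; auto. intros r [].
  - destruct IH as [m [rest [P Hm]]]; [discriminate|].
    destruct (Rle_dec (tt a) (tt m)) as [Hle|Hle].
    + exists m, (a :: rest). split.
      * eapply perm_trans. apply perm_skip. exact P. apply perm_swap.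
      * intros r [<-|Hr]; auto.
    + exists a, (b :: L'). split; auto.
      intros r0 Hr. apply (Permutation_in r0 P) in Hr. destruct Hr as [<-|Hr]; [lra|].
      specialize (Hm r0 Hr); lra.
Qed.

Lemma core_inv n : forall L, length L = n -> forall tau, (forall a, In a L -> tt a <= tau) ->
  Vq al (Sf L tau) (Tf L tau) <= Qf L.
Proof.
  induction n as [n IH] using lt_wf_ind. intros L HL tau Htau.
  destruct L as [|a0 L0].
  - unfold Vq, Sf, Tf, Qf. simpl. lra.
  - destruct (extract_max (a0 :: L0)) as [m [rest [P Hm]]]; [discriminate|].
    rewrite (Qf_perm _ _ P), (Sf_perm _ _ _ P), (Tf_perm _ _ _ P).
    assert (Hlen : (length rest < n)%nat).
    { pose proof (Permutation_length P) as PL. simpl in PL, HL. lia. }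
    assert (Hmt : tt m <= tau) by (apply Htau; apply (Permutation_in _ (Permutation_sym P)); left; auto).
    specialize (IH _ Hlen rest eq_refl (tt m) Hm).
    rewrite Qf_cons.
    assert (Hl : sumL (fun b => cc b * fk (Rabs (tt m - tt b))) rest =
       Sf rest (tt m) + al * Tf rest (tt m)).
    { unfold Sf, Tf. rewrite <- sumL_scal, <- sumL_plus. apply sumL_ext. intros b Hb.
      rewrite Rabs_right by (specialize (Hm b Hb); lra). unfold fk. ring. }
    rewrite Hl.
    assert (HS : Sf (m :: rest) (tt m) = cc m + Sf rest (tt m)).
    { unfold Sf. rewrite sumL_cons. rewrite Rminus_diag, Ropp_0, exp_0. ring. }
    assert (HT : Tf (m :: rest) (tt m) = Tf rest (tt m)).
    { unfold Tf. rewrite sumL_cons. rewrite Rminus_diag. ring. }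
    replace tau with (tt m + (tau - tt m)) by ring.
    rewrite Sf_shift, Tf_shift, HS, HT.
    eapply Rle_trans. apply decay; auto; lra.
    unfold Vq in *. nra.
Qed.

Lemma core_psd L : 0 <= Qf L.
Proof.
  set (tau := sumL (fun a => Rabs (tt a)) L).
  assert (H : forall a, In a L -> tt a <= tau).
  { intros a Ha. unfold tau. clear tau. induction L as [|b L IH]; [destruct Ha|].
    rewrite sumL_cons. destruct Ha as [<-|Ha].
    - assert (0 <= sumL (fun a => Rabs (tt a)) L) by (apply sumL_nonneg; intros; apply Rabs_pos).
      pose proof (Rle_abs (tt b)). lra.
    - specialize (IH Ha). pose proof (Rabs_pos (tt b)). lra. }
  eapply Rle_trans; [apply (Vq_nonneg al (Sf L tau) (Tf L tau)); auto|]. apply (core_inv _ L eq_refl tau H).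
Qed.
End Core.


Fixpoint rsum (f : nat -> R) (n : nat) : R :=
  match n with O => 0 | S m => rsum f m + f (S m) end.
Fixpoint csum (f : nat -> Complex.C) (n : nat) : Complex.C :=
  match n with O => RtoC 0 | S m => Cplus (csum f m) (f (S m)) end.

Lemma Re_csum f n : Re (csum f n) = rsum (fun k => Re (f k)) n.
Proof. induction n; simpl; auto. rewrite <- IHn. reflexivity. Qed.

Definition wc (rho y : R) : Complex.C := (rho * cos y, rho * sin y).

Lemma demoivre rho y k : Cpow (wc rho y) k = (rho ^ k * cos (INR k * y), rho ^ k * sin (INR k * y)).
Proof.
  induction k.
  - simpl. rewrite Rmult_0_l, cos_0, sin_0. apply injective_projections; simpl; ring.
  - simpl Cpow. rewrite IHk. unfold wc, Cmult. simpl fst; simpl snd.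
    rewrite S_INR. replace ((INR k + 1) * y) with (y + INR k * y) by ring.
    rewrite cos_plus, sin_plus. apply injective_projections; simpl; ring.
Qed.

Lemma RtoC_pow a n : RtoC (a ^ n) = Cpow (RtoC a) n.
Proof. induction n; simpl; auto. rewrite RtoC_mult, IHn. reflexivity. Qed.

Section Ser.
Variables sg rho y : R.
Let w := wc rho y.
Let s := RtoC sg.

Definition P1 n := csum (fun k => Cmult (RtoC (sg ^ (k-1))) (Cpow w k)) n.
Definition P2 n := csum (fun k => Cmult (RtoC (INR k * sg ^ (k-1))) (Cpow w k)) n.

Lemma P1_id n : Cmult (Cminus (RtoC 1) (Cmult s w)) (P1 n) =
   Cminus w (Cmult (Cpow s n) (Cpow w (S n))).
Proof.
  unfold P1. induction n.
  - simpl. unfold s. ring.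
  - simpl csum. rewrite Nat.sub_0_r.
    rewrite RtoC_pow. fold s.
    rewrite Cmult_plus_distr_l, IHn. simpl Cpow. ring.
Qed.

Lemma P2_id n : Cmult (Cpow (Cminus (RtoC 1) (Cmult s w)) 2) (P2 n) =
   Cplus (Cminus w (Cmult (RtoC (INR n + 1)) (Cmult (Cpow s n) (Cpow w (S n)))))
     (Cmult (RtoC (INR n)) (Cmult (Cpow s (S n)) (Cpow w (S (S n))))).
Proof.
  unfold P2. induction n.
  - simpl. unfold s. rewrite Rplus_0_l. ring.
  - cbn [csum]. replace (S n - 1)%nat with n by lia.
    rewrite RtoC_mult, RtoC_pow. fold s.
    rewrite Cmult_plus_distr_l, IHn. rewrite S_INR. cbn [Cpow]. rewrite !RtoC_plus. ring.
Qed.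
End Ser.


Lemma Re_RtoC_mult a z : Re (Cmult (RtoC a) z) = a * Re z.
Proof. unfold Re, Cmult, RtoC; simpl. ring. Qed.

Lemma rsum_plus f g n : rsum (fun k => f k + g k) n = rsum f n + rsum g n.
Proof. induction n; simpl; [lra|]. rewrite IHn; ring. Qed.
Lemma rsum_scal a f n : rsum (fun k => a * f k) n = a * rsum f n.
Proof. induction n; simpl; [lra|]. rewrite IHn; ring. Qed.
Lemma rsum_ext f g n : (forall k, f k = g k) -> rsum f n = rsum g n.
Proof. intros H; induction n; simpl; auto. rewrite IHn, H; auto. Qed.

Lemma Re_div z v : Re (Cdiv z v) = (fst z * fst v + snd z * snd v)/(fst v^2 + snd v^2).
Proof. unfold Cdiv, Cinv, Cmult, Re; simpl. unfold Rdiv. ring. Qed.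
Lemma sq_fst v : fst (Cpow v 2) = fst v ^2 - snd v ^2.
Proof. simpl. ring. Qed.
Lemma sq_snd v : snd (Cpow v 2) = 2 * fst v * snd v.
Proof. simpl. ring. Qed.

Section S2.
Variables (sg rho y : R).
Hypothesis Hsg : 0 <= sg < 1.
Hypothesis Hrho : 0 < rho <= 1.

Let c := cos y.
Let sn := sin y.
Let w := wc rho y.
Let u := Cminus (RtoC 1) (Cmult (RtoC sg) w).
Let D := 1 - 2*sg*rho*c + sg^2*rho^2.

Lemma trig1 : sn^2 + c^2 = 1.
Proof. unfold sn, c. rewrite <- (sin2_cos2 y). unfold Rsqr. ring. Qed.

Lemma D_pos : (1 - sg*rho)^2 <= D.
Proof.
  unfold D. assert (c <= 1) by apply COS_bound. assert (0 <= sg*rho) by nra. nra.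
Qed.

Lemma one_m_pos : 0 < 1 - sg*rho.
Proof. nra. Qed.

Lemma D_gt0 : 0 < D.
Proof. pose proof D_pos. pose proof one_m_pos. nra. Qed.

Lemma u_fst : fst u = 1 - sg*rho*c.
Proof. unfold u, w, wc, Cminus, Cplus, Copp, Cmult, RtoC; simpl. fold c. ring. Qed.
Lemma u_snd : snd u = - (sg*rho*sn).
Proof. unfold u, w, wc, Cminus, Cplus, Copp, Cmult, RtoC; simpl. fold sn. ring. Qed.

Lemma Cmod_u2 : Cmod u ^ 2 = D.
Proof.
  rewrite Cmod2_alt. unfold Re, Im. rewrite u_fst, u_snd. unfold D.
  pose proof trig1. replace (sg^2*rho^2) with (sg^2*rho^2*(sn^2+c^2)) by (rewrite H; ring). ring.
Qed.

Lemma Cmod_u_ge : 1 - sg <= Cmod u.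
Proof.
  pose proof Cmod_u2. pose proof D_pos. pose proof (Cmod_ge_0 u).
  assert (1 - sg <= 1 - sg*rho) by nra. nra.
Qed.

Lemma u_nz : u <> RtoC 0.
Proof.
  intros H. pose proof Cmod_u_ge. rewrite H in H0. rewrite Cmod_0 in H0. lra.
Qed.

Lemma Cmod_w : Cmod w = rho.
Proof.
  unfold Cmod, w, wc; simpl. pose proof trig1.
  replace (rho * cos y * (rho * cos y * 1) + rho * sin y * (rho * sin y * 1)) with (rho^2) .
  apply sqrt_pow2; lra. fold c sn. replace (rho^2) with (rho^2 * (sn^2+c^2)) by (rewrite H; ring). ring.
Qed.

Lemma Re_w_div_u : Re (Cdiv w u) = (rho*c - sg*rho^2)/D.
Proof.
  pose proof D_gt0. pose proof trig1.
  rewrite Re_div. rewrite u_fst, u_snd.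
  assert (Ew1 : fst w = rho * c) by reflexivity. assert (Ew2 : snd w = rho * sn) by reflexivity.
  rewrite Ew1, Ew2.
  assert (E : (1 - sg * rho * c) ^ 2 + (- (sg * rho * sn)) ^ 2 = D).
  { unfold D. replace (sg^2*rho^2) with (sg^2*rho^2*(sn^2+c^2)) by (rewrite H0; ring). ring. }
  rewrite E. replace (rho*c - sg*rho^2) with (rho*c - sg*rho^2*(sn^2+c^2)) by (rewrite H0; ring).
  field. lra.
Qed.

Lemma Re_w_div_u2 : Re (Cdiv w (Cpow u 2)) = (rho*c*(1+sg^2*rho^2) - 2*sg*rho^2)/D^2.
Proof.
  pose proof D_gt0. pose proof trig1.
  rewrite Re_div. rewrite sq_fst, sq_snd. rewrite u_fst, u_snd.
  assert (Ew1 : fst w = rho * c) by reflexivity. assert (Ew2 : snd w = rho * sn) by reflexivity.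
  rewrite Ew1, Ew2.
  assert (E : (1 - sg * rho * c) ^ 2 + (- (sg * rho * sn)) ^ 2 = D).
  { unfold D. replace (sg^2*rho^2) with (sg^2*rho^2*(sn^2+c^2)) by (rewrite H0; ring). ring. }
  replace (((1 - sg * rho * c) ^ 2 - (- (sg * rho * sn)) ^ 2) ^ 2 + (2 * (1 - sg * rho * c) * - (sg * rho * sn)) ^ 2)
    with (D^2) by (rewrite <- E; ring).
  replace (rho*c*(1+sg^2*rho^2) - 2*sg*rho^2) with (rho*c - 2*sg*rho^2*(sn^2+c^2) + sg^2*rho^3*c*(sn^2+c^2))
    by (rewrite H0; ring).
  field. lra.
Qed.

Lemma P1_eq n : P1 sg rho y n = Cminus (Cdiv w u) (Cdiv (Cmult (Cpow (RtoC sg) n) (Cpow w (S n))) u).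
Proof.
  pose proof u_nz as Hu. pose proof (P1_id sg rho y n) as E. fold w u in E.
  transitivity (Cdiv (Cmult u (P1 sg rho y n)) u). field. exact Hu.
  rewrite E. field. exact Hu.
Qed.

Lemma P2_eq n : P2 sg rho y n = Cminus (Cdiv w (Cpow u 2))
   (Cdiv (Cminus (Cmult (RtoC (INR n + 1)) (Cmult (Cpow (RtoC sg) n) (Cpow w (S n))))
                 (Cmult (RtoC (INR n)) (Cmult (Cpow (RtoC sg) (S n)) (Cpow w (S (S n)))))) (Cpow u 2)).
Proof.
  pose proof u_nz as Hu. pose proof (P2_id sg rho y n) as E. fold w u in E.
  assert (Hu2 : Cpow u 2 <> RtoC 0).
  { intros H2. assert (Cmod (Cpow u 2) = 0) by (rewrite H2; apply Cmod_0).
    rewrite Cmod_pow in H. pose proof Cmod_u_ge. assert (0 < Cmod u ^ 2) by (apply pow_lt; lra). lra. }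
  transitivity (Cdiv (Cmult (Cpow u 2) (P2 sg rho y n)) (Cpow u 2)). field. exact Hu.
  rewrite E. field. exact Hu.
Qed.

Lemma Cmod_sgpow n : Cmod (Cpow (RtoC sg) n) = sg ^ n.
Proof. rewrite Cmod_pow, Cmod_R, Rabs_pos_eq; lra. Qed.
Lemma Cmod_wpow n : Cmod (Cpow w n) = rho ^ n.
Proof. rewrite Cmod_pow, Cmod_w. reflexivity. Qed.

Lemma Re_P1 n : Re (P1 sg rho y n) = rsum (fun k => sg^(k-1) * rho^k * cos (INR k * y)) n.
Proof.
  unfold P1. rewrite Re_csum. apply rsum_ext. intros k. rewrite Re_RtoC_mult.
  fold w. unfold w. rewrite demoivre. unfold Re; simpl. ring.
Qed.
Lemma Re_P2 n : Re (P2 sg rho y n) = rsum (fun k => INR k * sg^(k-1) * rho^k * cos (INR k * y)) n.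
Proof.
  unfold P2. rewrite Re_csum. apply rsum_ext. intros k. rewrite Re_RtoC_mult.
  unfold w. rewrite demoivre. unfold Re; simpl. ring.
Qed.

Lemma Re_minus a b : Re (Cminus a b) = Re a - Re b.
Proof. unfold Re, Cminus, Cplus, Copp; simpl. ring. Qed.

Lemma pow_le1 a n : 0 <= a <= 1 -> 0 <= a ^ n <= 1.
Proof. intros H. induction n; simpl; nra. Qed.

Lemma rem1_bound n : Rabs (Re (Cdiv (Cmult (Cpow (RtoC sg) n) (Cpow w (S n))) u)) <= sg^n/(1-sg).
Proof.
  eapply Rle_trans. apply re_le_Cmod. rewrite Cmod_div by apply u_nz.
  rewrite Cmod_mult, Cmod_sgpow, Cmod_wpow.
  pose proof Cmod_u_ge. assert (0 <= sg^n) by (apply pow_le; lra).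
  pose proof (pow_le1 rho (S n) ltac:(lra)).
  unfold Rdiv. apply Rmult_le_compat.
  - nra.
  - left; apply Rinv_0_lt_compat; lra.
  - nra.
  - apply Rinv_le_contravar; lra.
Qed.

Lemma Cmod_minus_le a b : Cmod (Cminus a b) <= Cmod a + Cmod b.
Proof. unfold Cminus. eapply Rle_trans. apply Cmod_triangle. rewrite Cmod_opp. lra. Qed.

Lemma rem2_bound n : Rabs (Re (Cdiv (Cminus (Cmult (RtoC (INR n + 1)) (Cmult (Cpow (RtoC sg) n) (Cpow w (S n))))
                 (Cmult (RtoC (INR n)) (Cmult (Cpow (RtoC sg) (S n)) (Cpow w (S (S n)))))) (Cpow u 2)))
   <= (2 * INR n + 1) * sg^n/(1-sg)^2.
Proof.
  eapply Rle_trans. apply re_le_Cmod.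
  assert (Hu2 : Cpow u 2 <> RtoC 0).
  { intros H2. assert (Cmod (Cpow u 2) = 0) by (rewrite H2; apply Cmod_0).
    rewrite Cmod_pow in H. pose proof Cmod_u_ge. assert (0 < Cmod u ^ 2) by (apply pow_lt; lra). lra. }
  rewrite Cmod_div by exact Hu2. rewrite Cmod_pow.
  pose proof (pos_INR n) as Hn.
  assert (HX : Cmod (Cminus (Cmult (RtoC (INR n + 1)) (Cmult (Cpow (RtoC sg) n) (Cpow w (S n))))
                 (Cmult (RtoC (INR n)) (Cmult (Cpow (RtoC sg) (S n)) (Cpow w (S (S n)))))) <= (2 * INR n + 1) * sg^n).
  { eapply Rle_trans. apply Cmod_minus_le. rewrite !Cmod_mult, !Cmod_R, !Cmod_sgpow, !Cmod_wpow.
    rewrite !Rabs_pos_eq by lra.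
    assert (0 <= sg^n) by (apply pow_le; lra).
    pose proof (pow_le1 rho (S n) ltac:(lra)). pose proof (pow_le1 rho (S (S n)) ltac:(lra)).
    simpl (sg ^ S n). assert (0 <= rho ^ S n) by (apply pow_le; lra). assert (0 <= rho ^ S (S n)) by (apply pow_le; lra).
    assert (sg * sg^n <= sg^n) by nra.
    assert ((INR n + 1) * (sg ^ n * rho ^ S n) <= (INR n + 1) * sg^n) by (apply Rmult_le_compat_l; nra).
    assert (INR n * (sg * sg ^ n * rho ^ S (S n)) <= INR n * sg^n) by (apply Rmult_le_compat_l; nra).
    lra. }
  pose proof Cmod_u_ge.
  assert (0 < (1-sg)^2) by (apply pow_lt; lra).
  assert ((1-sg)^2 <= Cmod u ^ 2) by (apply pow_incr; lra).
  unfold Rdiv. apply Rmult_le_compat; auto.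
  - apply Cmod_ge_0.
  - left; apply Rinv_0_lt_compat; lra.
  - apply Rinv_le_contravar; lra.
Qed.

Definition ggA (A : R) := (rho*c - sg*rho^2)/D + A*(rho*c*(1+sg^2*rho^2) - 2*sg*rho^2)/D^2.

Lemma series_bound (A : R) n :
  Rabs (ggA A - rsum (fun k => sg^(k-1) * rho^k * (1 + A * INR k) * cos (INR k * y)) n)
   <= (1 + 2 * Rabs A) * (INR n + 1) * sg^n / (1-sg)^2.
Proof.
  assert (Hs : rsum (fun k => sg^(k-1) * rho^k * (1 + A * INR k) * cos (INR k * y)) n
     = Re (P1 sg rho y n) + A * Re (P2 sg rho y n)).
  { rewrite Re_P1, Re_P2, <- rsum_scal, <- rsum_plus. apply rsum_ext. intros; ring. }
  rewrite Hs. rewrite P1_eq, P2_eq, !Re_minus. fold w u.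
  assert (Hg : ggA A = Re (Cdiv w u) + A * Re (Cdiv w (Cpow u 2))).
  { unfold ggA. rewrite Re_w_div_u, Re_w_div_u2. pose proof D_gt0. field. lra. }
  rewrite Hg.
  set (R1 := Re (Cdiv (Cmult (Cpow (RtoC sg) n) (Cpow w (S n))) u)).
  set (R2 := Re (Cdiv (Cminus (Cmult (RtoC (INR n + 1)) (Cmult (Cpow (RtoC sg) n) (Cpow w (S n))))
                 (Cmult (RtoC (INR n)) (Cmult (Cpow (RtoC sg) (S n)) (Cpow w (S (S n)))))) (Cpow u 2))).
  pose proof (rem1_bound n) as B1. pose proof (rem2_bound n) as B2. fold R1 in B1. fold R2 in B2.
  replace (Re (Cdiv w u) + A * Re (Cdiv w (Cpow u 2)) - (Re (Cdiv w u) - R1 + A * (Re (Cdiv w (Cpow u 2)) - R2)))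
    with (R1 + A * R2) by ring.
  eapply Rle_trans. apply Rabs_triang. rewrite Rabs_mult.
  pose proof (pos_INR n). assert (0 <= sg^n) by (apply pow_le; lra).
  assert (0 < 1 - sg) by lra. assert (0 < (1-sg)^2) by (apply pow_lt; lra).
  assert (E1 : sg^n/(1-sg) <= (INR n + 1) * sg^n/(1-sg)^2).
  { replace (sg^n/(1-sg)) with (sg^n*(1-sg)/(1-sg)^2) by (field; lra).
    unfold Rdiv. apply Rmult_le_compat_r; [left; apply Rinv_0_lt_compat; lra | nra]. }
  assert (E2 : Rabs A * Rabs R2 <= Rabs A * ((2 * INR n + 1) * sg ^ n / (1 - sg) ^ 2)) by
    (apply Rmult_le_compat_l; [apply Rabs_pos | exact B2]).
  assert (E3 : (2 * INR n + 1) * sg ^ n / (1 - sg) ^ 2 <= 2 * ((INR n + 1) * sg^n/(1-sg)^2)).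
  { unfold Rdiv. assert (0 <= / (1-sg)^2) by (left; apply Rinv_0_lt_compat; lra). nra. }
  pose proof (Rabs_pos A).
  assert (0 <= (INR n + 1) * sg^n/(1-sg)^2) by (unfold Rdiv; apply Rmult_le_pos; [nra|left; apply Rinv_0_lt_compat; lra]).
  replace ((1 + 2 * Rabs A) * (INR n + 1) * sg ^ n / (1 - sg) ^ 2) with
     ((INR n + 1) * sg ^ n / (1 - sg) ^ 2 + 2 * Rabs A * ((INR n + 1) * sg ^ n / (1 - sg) ^ 2)) by (field; lra).
  nra.
Qed.
End S2.


Lemma bern h m : 0 <= h -> 1 + INR m * h <= (1+h)^m.
Proof.
  intros Hh. induction m.
  - simpl. lra.
  - rewrite S_INR. simpl pow. assert (0 <= INR m) by apply pos_INR. nra.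
Qed.

Lemma lim_nonneg sg K x : 0 <= sg < 1 -> 0 <= K ->
  (forall n, - K * (INR n + 1) * sg ^ n <= x) -> 0 <= x.
Proof.
  intros Hs HK H. destruct (Rle_lt_dec 0 x) as [|Hx]; auto. exfalso.
  destruct (Req_dec sg 0) as [E|Hs0].
  - specialize (H 1%nat). rewrite E in H. simpl in H. lra.
  - assert (Hsp : 0 < sg) by lra.
    set (h := /sg - 1).
    assert (Hh : 0 < h). { unfold h. assert (1 < /sg). { rewrite <- Rinv_1. apply Rinv_lt_contravar; lra. } lra. }
    assert (Hb : forall m, sg^m * (1 + INR m * h) <= 1).
    { intros m. assert (E1 : sg^m * (1+h)^m = 1). { rewrite <- Rpow_mult_distr. unfold h.
        replace (sg * (1 + (/sg - 1))) with 1 by (field; lra). apply pow1. }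
      pose proof (bern h m ltac:(lra)). assert (0 <= sg^m) by (apply pow_le; lra). nra. }
    destruct (INR_unbounded (3*K/(h^2 * (-x)))) as [m0 Hm0].
    set (m := S m0).
    assert (Hm : 3*K/(h^2 * (-x)) < INR m). { unfold m. rewrite S_INR. lra. }
    assert (Hm1 : 1 <= INR m). { unfold m. rewrite S_INR. pose proof (pos_INR m0). lra. }
    specialize (H (2*m)%nat). rewrite mult_INR in H. simpl (INR 2) in H.
    rewrite pow_mult in H.
    replace ((sg^2)^m) with ((sg^m)^2) in H by (rewrite <- !pow_mult; f_equal; lia).
    specialize (Hb m). set (q := sg^m) in *.
    assert (0 <= q) by (apply pow_le; lra).
    assert (Hq : q * (INR m * h) <= 1) by (assert (q * (1 + INR m * h) = q + q * (INR m * h)) by ring; lra).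
    (* K*(2m+1) q^2 <= 3 K m q^2 <= 3K /(m h^2) *)
    assert (Hq0 : 0 <= q*(INR m*h)) by (apply Rmult_le_pos; [lra| apply Rmult_le_pos; lra]).
    assert (Hq2 : (INR m * h)^2 * q^2 <= 1).
    { replace ((INR m * h)^2 * q^2) with ((q*(INR m*h))^2) by ring. nra. }
    assert (Hkey : K * ((2 * INR m + 1) * q^2) * (INR m * h^2) <= 3 * K).
    { assert ((2*INR m + 1) <= 3 * INR m) by lra.
      assert (0 <= q^2) by nra.
      assert (K * ((2 * INR m + 1) * q^2) * (INR m * h^2) <= K * (3 * INR m * q^2) * (INR m * h^2)).
      { apply Rmult_le_compat_r. nra. apply Rmult_le_compat_l; nra. }
      assert (K * (3 * INR m * q^2) * (INR m * h^2) = 3 * K * ((INR m * h)^2 * q^2)) by ring.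
      nra. }
    assert (Hm' : 3*K < INR m * (h^2 * (-x))).
    { assert (Hp : 0 < h^2 * (-x)) by (apply Rmult_lt_0_compat; [apply pow_lt; lra | lra]).
      apply (Rmult_lt_compat_r (h^2 * (-x))) in Hm; [|exact Hp].
      unfold Rdiv in Hm. rewrite Rmult_assoc, Rinv_l in Hm by lra. lra. }
    assert (K * ((2 * INR m + 1) * q^2) < -x).
    { assert (Hp : 0 < INR m * h^2) by (apply Rmult_lt_0_compat; [lra|apply pow_lt; lra]).
      apply (Rmult_lt_reg_r (INR m * h^2)); [exact Hp|].
      assert (-x * (INR m * h^2) = INR m * (h^2 * (-x))) by ring. lra. }
    lra.
Qed.


Lemma ident1 s r c a b p q K B M P G1 :
 a = 1 + s^2*r^2 -> b = 2*s*r -> p = 1 - s*r^2 -> q = (1-s)*r ->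
 K = (1-r^2)*(1+s) -> B = c*a - b -> M = a^2 - b^2 -> P = a*p + q*b ->
 G1 = (1+r)^2*(1-s)*(1-s*r)^2 ->
 (a-b)*a^2*(2*(a-b*c)*(p+q*c) - K*B) = (a-b-B)*2*M*P + B*a^2*G1 + 2*b*q*B*(a-b-B)*(a-b).
Proof. intros. subst. ring. Qed.
Lemma ident2 s r c a b p q K B M P G1 :
 a = 1 + s^2*r^2 -> b = 2*s*r -> p = 1 - s*r^2 -> q = (1-s)*r ->
 K = (1-r^2)*(1+s) -> B = c*a - b -> M = a^2 - b^2 -> P = a*p + q*b ->
 G1 = (1-r)^2*(1-s)*(1+s*r)^2 ->
 (a+b)*a^2*(2*(a-b*c)*(p+q*c) + K*B) = (a+b+B)*2*M*P + (-B)*a^2*G1 + 2*b*q*(-B)*(a+b+B)*(a+b).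
Proof. intros. subst. ring. Qed.

Lemma poly_main s r c : 0 <= s <= 1 -> 0 < r <= 1 -> -1 <= c <= 1 ->
  (1-r^2)*(1+s)*Rabs (c*(1+s^2*r^2) - 2*s*r) <= 2*(1 - 2*s*r*c + s^2*r^2)*(1 - s*r^2 + (1-s)*r*c).
Proof.
  intros Hs Hr Hc.
  set (a := 1 + s^2*r^2). set (b := 2*s*r). set (p := 1 - s*r^2). set (q := (1-s)*r).
  set (K := (1-r^2)*(1+s)). set (B := c*a - b). set (M := a^2 - b^2). set (P := a*p + q*b).
  assert (Ha : 1 <= a) by (unfold a; nra).
  assert (Hb : 0 <= b) by (unfold b; nra).
  assert (Hamb : a - b = (1 - s*r)^2) by (unfold a, b; ring).
  assert (Hapb : a + b = (1 + s*r)^2) by (unfold a, b; ring).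
  assert (Hp : 0 <= p) by (unfold p; nra).
  assert (Hq : 0 <= q) by (unfold q; nra).
  assert (HM : 0 <= M) by (unfold M; replace (a^2 - b^2) with ((a-b)*(a+b)) by ring; rewrite Hamb, Hapb; apply Rmult_le_pos; apply pow2_ge_0).
  assert (HP : 0 <= P) by (unfold P; nra).
  assert (HK : 0 <= K) by (unfold K; nra).
  replace (c*(1+s^2*r^2) - 2*s*r) with B by (unfold B, a, b; ring).
  replace (2*(1 - 2*s*r*c + s^2*r^2)*(1 - s*r^2 + (1-s)*r*c)) with (2*(a - b*c)*(p + q*c)) by (unfold a,b,p,q; ring).
  fold K.
  destruct (Rle_lt_dec 0 B) as [HB|HB].
  - rewrite Rabs_pos_eq by lra.
    set (G1 := (1+r)^2*(1-s)*(1-s*r)^2).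
    assert (HG1 : 0 <= G1) by (unfold G1; apply Rmult_le_pos; [apply Rmult_le_pos; [apply pow2_ge_0|lra]|apply pow2_ge_0]).
    pose proof (ident1 s r c a b p q K B M P G1 eq_refl eq_refl eq_refl eq_refl eq_refl eq_refl eq_refl eq_refl eq_refl) as E.
    assert (H1 : 0 <= a - b - B) by (replace (a-b-B) with (a*(1-c)) by (unfold B; ring); apply Rmult_le_pos; lra).
    assert (Hr1 : 0 <= (a-b-B)*2*M*P + B*a^2*G1 + 2*b*q*B*(a-b-B)*(a-b)).
    { assert (0 <= (a-b-B)*2*M*P) by (repeat apply Rmult_le_pos; lra).
      assert (0 <= B*a^2*G1) by (repeat apply Rmult_le_pos; try lra; nra).
      assert (0 <= 2*b*q*B*(a-b-B)*(a-b)) by (repeat apply Rmult_le_pos; try lra; rewrite Hamb; apply pow2_ge_0).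
      lra. }
    destruct (Rle_lt_dec (a - b) 0) as [Hz|Hz].
    + assert (Hsr : s*r = 1) by (rewrite Hamb in Hz; nra).
      assert (r = 1) by nra. assert (s = 1) by nra.
      unfold K, p, q. subst r s. lra.
    + assert (0 <= 2*(a-b*c)*(p+q*c) - K*B).
      { apply (Rmult_le_reg_l ((a-b)*a^2)). apply Rmult_lt_0_compat; nra. nra. }
      unfold K, a in *; lra.
  - rewrite Rabs_left by lra.
    set (G1 := (1-r)^2*(1-s)*(1+s*r)^2).
    assert (HG1 : 0 <= G1) by (unfold G1; apply Rmult_le_pos; [apply Rmult_le_pos; [apply pow2_ge_0|lra]|apply pow2_ge_0]).
    pose proof (ident2 s r c a b p q K B M P G1 eq_refl eq_refl eq_refl eq_refl eq_refl eq_refl eq_refl eq_refl eq_refl) as E.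
    assert (H1 : 0 <= a + b + B) by (replace (a+b+B) with (a*(1+c)) by (unfold B; ring); apply Rmult_le_pos; lra).
    assert (Hr1 : 0 <= (a+b+B)*2*M*P + (-B)*a^2*G1 + 2*b*q*(-B)*(a+b+B)*(a+b)).
    { assert (0 <= (a+b+B)*2*M*P) by (repeat apply Rmult_le_pos; lra).
      assert (0 <= (-B)*a^2*G1) by (repeat apply Rmult_le_pos; try lra; nra).
      assert (0 <= 2*b*q*(-B)*(a+b+B)*(a+b)) by (repeat apply Rmult_le_pos; try lra; rewrite Hapb; apply pow2_ge_0).
      lra. }
    assert (0 <= 2*(a-b*c)*(p+q*c) + K*B).
    { apply (Rmult_le_reg_l ((a+b)*a^2)). rewrite Hapb. apply Rmult_lt_0_compat; [apply pow_lt; nra| nra]. nra. }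
    unfold K, a in *; lra.
Qed.

Definition Dq (s r c : R) := 1 - 2*s*r*c + s^2*r^2.
Definition gq (A s r c : R) := (r*c - s*r^2)/Dq s r c + A*(r*c*(1+s^2*r^2) - 2*s*r^2)/(Dq s r c)^2.

Lemma comp_deriv A s r c : 0 <= s <= 1 -> 0 < r <= 1 -> -1 <= c <= 1 -> 0 < Dq s r c ->
  Rabs A <= (/r - r)/2 -> 0 <= gq A s r c + /(1+s).
Proof.
  intros Hs Hr Hc HD HA.
  pose proof (poly_main s r c Hs Hr Hc) as Hp.
  set (B := c*(1+s^2*r^2) - 2*s*r) in *.
  set (Aq := 1 - s*r^2 + (1-s)*r*c) in *.
  fold (Dq s r c) in Hp. set (D := Dq s r c) in *.
  assert (E : gq A s r c + /(1+s) = (D*Aq + A*r*B*(1+s)) / (D^2*(1+s))).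
  { assert (HD' : 1 - 2*s*r*c + s^2*r^2 <> 0) by (unfold D, Dq in HD; lra).
    unfold gq. fold D. unfold Aq, B, D, Dq. field. repeat split; try lra; try exact HD'. }
  rewrite E.
  assert (Hn : 0 <= D*Aq + A*r*B*(1+s)).
  { assert (H1 : Rabs (A*r*B*(1+s)) <= (1-r^2)*(1+s)*Rabs B / 2).
    { rewrite !Rabs_mult. rewrite (Rabs_pos_eq r) by lra. rewrite (Rabs_pos_eq (1+s)) by lra.
      assert (HX : Rabs A * r <= (1 - r^2)/2).
      { apply Rmult_le_compat_r with (r := r) in HA; [|lra].
        replace ((/r - r)/2 * r) with ((1-r^2)/2) in HA by (field; lra). exact HA. }
      replace ((1-r^2)*(1+s)*Rabs B/2) with ((1-r^2)/2 * Rabs B * (1+s)) by field.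
      apply Rmult_le_compat_r; [lra|]. apply Rmult_le_compat_r; [apply Rabs_pos|]. exact HX. }
    pose proof (Rabs_pos B) as HBp. pose proof (Rle_abs (-(A*r*B*(1+s)))) as H3. rewrite Rabs_Ropp in H3. unfold Aq in *. unfold D, Dq in *. nra. }
  apply Rmult_le_pos; auto. left. apply Rinv_0_lt_compat. apply Rmult_lt_0_compat; [apply pow_lt|]; lra.
Qed.

Definition hq (A s r c : R) := -/2 * ln (Dq s r c) + A * (s*r*c - s^2*r^2) / Dq s r c.

Lemma hq_derive A s r c : 0 < Dq s r c -> is_derive (fun s => hq A s r c) s (gq A s r c).
Proof.
  intros HD. unfold hq, gq. unfold Dq in *. auto_derive.
  - split; [lra|]. split; auto. lra.
  - field. lra.
Qed.


Definition dx (z z' : R*R) := fst z - fst z'.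
Definition dy (z z' : R*R) := snd z - snd z'.
Definition rr (z z' : R*R) := exp (- Rabs (dx z z')).
Definition Hp (al s : R) (z z' : R*R) := hq (al * Rabs (dx z z')) s (rr z z') (cos (dy z z')).
Definition Gp (al s : R) (z z' : R*R) := gq (al * Rabs (dx z z')) s (rr z z') (cos (dy z z')).

Lemma rr_bounds z z' : 0 < rr z z' <= 1.
Proof.
  unfold rr. split. apply exp_pos.
  rewrite <- exp_0. destruct (Req_dec (Rabs (dx z z')) 0) as [E|E].
  - rewrite E, Ropp_0. lra.
  - left. apply exp_increasing. pose proof (Rabs_pos (dx z z')). lra.
Qed.

Lemma exp_pow_INR a k : exp a ^ k = exp (INR k * a).
Proof.
  induction k. simpl. rewrite Rmult_0_l, exp_0. auto.
  rewrite S_INR. simpl pow. rewrite IHk. rewrite <- exp_plus. f_equal. ring.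
Qed.

Lemma sumL_rsum {T : Type} (F : T -> nat -> R) l n :
  sumL (fun a => rsum (F a) n) l = rsum (fun k => sumL (fun a => F a k) l) n.
Proof.
  induction n; simpl.
  - induction l; simpl; auto. rewrite IHl. lra.
  - rewrite sumL_plus, IHn. auto.
Qed.

Lemma rsum_nonneg f n : (forall k, 0 <= f k) -> 0 <= rsum f n.
Proof. intros H; induction n; simpl; [lra|]. specialize (H (S n)). lra. Qed.

Lemma sumL_sub {T : Type} (f g : T -> R) l : sumL (fun a => f a - g a) l = sumL f l - sumL g l.
Proof. unfold Rminus. rewrite sumL_plus, sumL_opp. reflexivity. Qed.

Section Main.
Variable al : R.
Hypothesis Hal : -1 <= al <= 1.

Definition term (s : R) (z z' : R*R) (k : nat) :=
  s^(k-1) * rr z z' ^ k * (1 + al * Rabs (dx z z') * INR k) * cos (INR k * dy z z').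

Lemma slice_psd (w : list (R*R)) s k : 0 <= s -> 0 <= sumL (fun z => sumL (fun z' => term s z z' k) w) w.
Proof.
  intros Hs.
  pose proof (core_psd (fun z => INR k * fst z) (fun z => cos (INR k * snd z)) al Hal w) as Q1.
  pose proof (core_psd (fun z => INR k * fst z) (fun z => sin (INR k * snd z)) al Hal w) as Q2.
  unfold Qf in Q1, Q2.
  assert (E : sumL (fun z => sumL (fun z' => term s z z' k) w) w =
     s^(k-1) * (sumL (fun a => sumL (fun b => cos (INR k * snd a) * cos (INR k * snd b) * fk al (Rabs (INR k * fst a - INR k * fst b))) w) w
      + sumL (fun a => sumL (fun b => sin (INR k * snd a) * sin (INR k * snd b) * fk al (Rabs (INR k * fst a - INR k * fst b))) w) w)).
  { rewrite <- sumL_plus, <- sumL_scal. apply sumL_ext. intros a _.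
    rewrite <- sumL_plus, <- sumL_scal. apply sumL_ext. intros b _.
    unfold term, fk, rr, dx, dy. rewrite exp_pow_INR.
    replace (INR k * fst a - INR k * fst b) with (INR k * (fst a - fst b)) by ring.
    rewrite Rabs_mult, (Rabs_pos_eq (INR k)) by apply pos_INR.
    replace (INR k * (snd a - snd b)) with (INR k * snd a - INR k * snd b) by ring.
    rewrite cos_minus. replace (INR k * - Rabs (fst a - fst b)) with (- (INR k * Rabs (fst a - fst b))) by ring.
    ring. }
  rewrite E. apply Rmult_le_pos. apply pow_le; auto. lra.
Qed.

Lemma Gp_series s z z' n : 0 <= s < 1 ->
  Gp al s z z' >= rsum (term s z z') n - (1 + 2 * Rabs (al * Rabs (dx z z'))) * (INR n + 1) * s^n / (1-s)^2.
Proof.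
  intros Hs.
  pose proof (series_bound s (rr z z') (dy z z') Hs (rr_bounds z z') (al * Rabs (dx z z')) n) as SB.
  assert (E1 : ggA s (rr z z') (dy z z') (al * Rabs (dx z z')) = Gp al s z z').
  { unfold ggA, Gp, gq, Dq. reflexivity. }
  assert (E2 : rsum (fun k => s ^ (k - 1) * rr z z' ^ k * (1 + al * Rabs (dx z z') * INR k) * cos (INR k * dy z z')) n
     = rsum (term s z z') n).
  { apply rsum_ext. intros; unfold term. ring. }
  rewrite E1, E2 in SB.
  pose proof (Rle_abs (- (Gp al s z z' - rsum (term s z z') n))) as H. rewrite Rabs_Ropp in H. lra.
Qed.

Lemma Gsum_nonneg (w : list (R*R)) s : 0 <= s < 1 ->
  0 <= sumL (fun z => sumL (fun z' => Gp al s z z') w) w.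
Proof.
  intros Hs.
  set (K := sumL (fun z => sumL (fun z' => (1 + 2 * Rabs (al * Rabs (dx z z'))) / (1-s)^2) w) w).
  apply (lim_nonneg s K); auto.
  - unfold K. apply sumL_nonneg; intros; apply sumL_nonneg; intros.
    assert (0 < (1-s)^2) by (apply pow_lt; lra). pose proof (Rabs_pos (al * Rabs (dx a a0))).
    unfold Rdiv. apply Rmult_le_pos; [lra|]. left; apply Rinv_0_lt_compat; lra.
  - intros n.
    assert (Hr : 0 <= rsum (fun k => sumL (fun z => sumL (fun z' => term s z z' k) w) w) n).
    { apply rsum_nonneg. intros k. apply slice_psd. lra. }
    rewrite <- sumL_rsum in Hr.
    set (kk := fun z z' : R*R => (1 + 2 * Rabs (al * Rabs (dx z z'))) / (1-s)^2).
    set (c := (INR n + 1) * s^n).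
    assert (Hl1 : sumL (fun z => sumL (fun z' => rsum (term s z z') n - c * kk z z') w) w
                  <= sumL (fun z => sumL (fun z' => Gp al s z z') w) w).
    { apply sumL_le; intros; apply sumL_le; intros.
      pose proof (Gp_series s a a0 n Hs). unfold kk, c. unfold Rdiv in *. lra. }
    assert (Hl2 : sumL (fun z => sumL (fun z' => rsum (term s z z') n - c * kk z z') w) w
       = sumL (fun z => rsum (fun k => sumL (fun z' => term s z z' k) w) n) w - K * c).
    { unfold K. fold kk. rewrite (Rmult_comm _ c). rewrite <- sumL_scal, <- sumL_sub.
      apply sumL_ext; intros z _.
      rewrite <- sumL_scal, <- sumL_rsum, <- sumL_sub. apply sumL_ext; intros; cbv beta. unfold kk. reflexivity. }
    assert (K * ((INR n + 1) * s ^ n) = K * (INR n + 1) * s^n) by ring. fold c in H. lra.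
Qed.
End Main.


Lemma sumL_derive {T : Type} (F : T -> R -> R) (dF : T -> R) l x :
  (forall a, In a l -> is_derive (F a) x (dF a)) ->
  is_derive (fun t => sumL (fun a => F a t) l) x (sumL dF l).
Proof.
  induction l as [|a l IH]; intros H.
  - simpl. auto_derive; auto.
  - simpl. apply (is_derive_plus (F a) (fun t => sumL (fun a0 => F a0 t) l)).
    + apply H; left; auto.
    + apply IH; intros; apply H; right; auto.
Qed.

Lemma Dq_pos s r c : 0 <= s -> 0 < r -> s * r < 1 -> -1 <= c <= 1 -> 0 < Dq s r c.
Proof.
  intros. unfold Dq. assert (0 <= s*r) by nra. assert (0 < (1 - s*r)^2) by (apply pow_lt; lra). nra.
Qed.

Lemma G_nonneg al (Hal : -1 <= al <= 1) (w : list (R*R)) s : 0 <= s < 1 ->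
  0 <= sumL (fun z => sumL (fun z' => Hp al s z z') w) w.
Proof.
  intros Hs.
  set (G := fun t => sumL (fun z => sumL (fun z' => Hp al t z z') w) w).
  set (dG := fun t => sumL (fun z => sumL (fun z' => Gp al t z z') w) w).
  assert (Hd : forall t, 0 <= t < 1 -> is_derive G t (dG t)).
  { intros t Ht. unfold G, dG.
    apply (sumL_derive (fun z t => sumL (fun z' => Hp al t z z') w)). intros a _.
    apply (sumL_derive (fun z' t => Hp al t a z')). intros b _.
    unfold Hp, Gp. apply hq_derive. pose proof (rr_bounds a b).
    apply Dq_pos; try lra. nra. split; [apply COS_bound| apply COS_bound]. }
  destruct (MVT_gen G 0 s dG) as [c [Hc Heq]].
  - intros x Hx. rewrite Rmin_left in Hx by lra. rewrite Rmax_right in Hx by lra. apply Hd. lra.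
  - intros x Hx. rewrite Rmin_left in Hx by lra. rewrite Rmax_right in Hx by lra.
    apply cont_of_ex_derive. eexists. apply Hd. lra.
  - rewrite Rmin_left in Hc by lra. rewrite Rmax_right in Hc by lra.
    assert (HG0 : G 0 = 0).
    { unfold G. rewrite (sumL_ext _ (fun _ => 0)). rewrite sumL_const; lra.
      intros a _. rewrite (sumL_ext _ (fun _ => 0)). rewrite sumL_const; lra.
      intros b _. unfold Hp, hq, Dq. replace (1 - 2 * 0 * rr a b * cos (dy a b) + 0 ^ 2 * rr a b ^ 2) with 1 by ring.
      rewrite ln_1. field. }
    assert (0 <= dG c) by (apply Gsum_nonneg; auto; lra).
    change (0 <= G s). assert (0 <= dG c * (s - 0)) by (apply Rmult_le_pos; lra). lra.
Qed.


Lemma sinh_ge L : 0 <= L -> L <= (exp L - exp (-L))/2.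
Proof.
  intros HL.
  set (psi := fun t => (exp t - exp (-t))/2 - t).
  destruct (MVT_gen psi 0 L (fun t => (exp t + exp (-t))/2 - 1)) as [c [Hc Heq]].
  - intros x _. unfold psi. auto_derive; auto. field.
  - intros x _. apply cont_of_ex_derive. unfold psi. auto_derive; auto.
  - unfold psi in Heq. rewrite Ropp_0, exp_0 in Heq.
    pose proof (exp_ineq1_le c). pose proof (exp_ineq1_le (-c)).
    assert (0 <= ((exp c + exp (- c)) / 2 - 1) * (L - 0)) by (apply Rmult_le_pos; lra). lra.
Qed.

Lemma Dq_pos2 s r c : 0 <= s <= 1 -> 0 < r <= 1 -> -1 <= c <= 1 -> (r < 1 \/ c < 1) -> 0 < Dq s r c.
Proof.
  intros Hs Hr Hc Hrc. unfold Dq.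
  replace (1 - 2*s*r*c + s^2*r^2) with ((1 - s*r)^2 + 2*s*r*(1-c)) by ring.
  assert (0 <= 2*s*r*(1-c)) by (repeat apply Rmult_le_pos; lra).
  destruct Hrc as [Hr1|Hc1].
  - assert (0 < (1-s*r)^2) by (apply pow_lt; nra). lra.
  - destruct (Req_dec s 0) as [E|E].
    + subst. lra.
    + assert (0 < 2*s*r*(1-c)) by (apply Rmult_lt_0_compat; [apply Rmult_lt_0_compat|]; lra).
      assert (0 <= (1-s*r)^2) by apply pow2_ge_0. lra.
Qed.

Lemma W_eq al x y : 0 < Dq 1 (exp (- Rabs x)) (cos y) ->
  W al x y = hq (al * Rabs x) 1 (exp (- Rabs x)) (cos y).
Proof.
  intros HD.
  set (L := Rabs x) in *. set (r := exp (-L)) in *. set (c := cos y) in *.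
  assert (Hr : 0 < r) by apply exp_pos.
  assert (HeL : exp L = / r) by (unfold r; rewrite exp_Ropp, Rinv_inv; auto).
  assert (Hch : cosh x = (/r + r)/2).
  { unfold cosh, L in *. unfold Rabs in *. destruct (Rcase_abs x).
    - rewrite <- HeL. unfold r. rewrite Ropp_involutive. lra.
    - rewrite <- HeL. unfold r. lra. }
  assert (Hsh : x * sinh x = L * (/r - r)/2).
  { unfold sinh, L in *. unfold Rabs in *. destruct (Rcase_abs x).
    - rewrite <- HeL. unfold r. rewrite Ropp_involutive. field.
    - rewrite <- HeL. unfold r. field. }
  assert (HD' : 2 * (cosh x - cos y) = Dq 1 r c / r).
  { rewrite Hch. unfold Dq. fold c. field. lra. }
  assert (Hln : ln (2 * (cosh x - cos y)) = ln (Dq 1 r c) + L).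
  { rewrite HD'. unfold Rdiv. rewrite ln_mult; auto. rewrite ln_Rinv by auto. unfold r. rewrite ln_exp. ring.
    apply Rinv_0_lt_compat; auto. }
  unfold W. rewrite Hln.
  replace (al * x * sinh x) with (al * (x * sinh x)) by ring. rewrite Hsh.
  replace (cosh x - cos y) with (Dq 1 r c / r / 2) by lra.
  fold L. unfold hq. fold c. unfold Dq in *. field. split; lra.
Qed.

Lemma compare al s L c : -1 <= al <= 1 -> 0 <= s < 1 -> 0 <= L -> -1 <= c <= 1 ->
  (exp (-L) < 1 \/ c < 1) ->
  hq (al*L) s (exp (-L)) c + ln ((1+s)/2) <= hq (al*L) 1 (exp (-L)) c.
Proof.
  intros Hal Hs HL Hc Hrc.
  set (r := exp (-L)) in *.
  assert (Hr : 0 < r <= 1).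
  { split. apply exp_pos. unfold r. rewrite <- exp_0. destruct (Req_dec L 0).
    - subst. rewrite Ropp_0. lra.
    - left. apply exp_increasing. lra. }
  assert (HA : Rabs (al * L) <= (/r - r)/2).
  { unfold r. rewrite exp_Ropp, Rinv_inv. rewrite <- exp_Ropp.
    rewrite Rabs_mult, (Rabs_pos_eq L) by lra. pose proof (sinh_ge L HL).
    assert (Rabs al <= 1) by (apply Rabs_le; lra). nra. }
  set (phi := fun t => hq (al*L) t r c + ln (1+t)).
  assert (Hd : forall x, s <= x <= 1 -> is_derive phi x (gq (al*L) x r c + /(1+x))).
  { intros x Hx. unfold phi. apply (is_derive_plus (fun t => hq (al*L) t r c) (fun t => ln (1+t))).
    + apply hq_derive. apply Dq_pos2; auto; lra.
    + auto_derive. lra. field. lra. }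
  destruct (MVT_gen phi s 1 (fun t => gq (al*L) t r c + /(1+t))) as [xi [Hxi Heq]].
  - intros x Hx. rewrite Rmin_left in Hx by lra. rewrite Rmax_right in Hx by lra. apply Hd; lra.
  - intros x Hx. rewrite Rmin_left in Hx by lra. rewrite Rmax_right in Hx by lra.
    apply cont_of_ex_derive. eexists. apply Hd; lra.
  - rewrite Rmin_left in Hxi by lra. rewrite Rmax_right in Hxi by lra.
    assert (Hg : 0 <= gq (al*L) xi r c + /(1+xi)).
    { apply comp_deriv; auto; try lra. apply Dq_pos2; auto; lra. }
    unfold phi in Heq.
    assert (0 <= (gq (al * L) xi r c + / (1 + xi)) * (1 - s)) by (apply Rmult_le_pos; lra).
    unfold Rdiv. rewrite ln_mult by lra. rewrite ln_Rinv by lra.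
    replace (1+1) with 2 in Heq by ring. lra.
Qed.

Lemma cos_lt_1 t : - (2*PI) < t < 2*PI -> t <> 0 -> cos t < 1.
Proof.
  intros Ht Hn. replace t with (2 * (t/2)) by field. rewrite cos_2a_sin.
  assert (sin (t/2) <> 0).
  { pose proof PI_RGT_0. destruct (Rlt_le_dec 0 t).
    - apply Rgt_not_eq. apply sin_gt_0; lra.
    - assert (t < 0) by lra. replace (t/2) with (- (-t/2)) by field. rewrite sin_neg.
      assert (0 < sin (-t/2)) by (apply sin_gt_0; lra). lra. }
  assert (0 < sin (t/2) * sin (t/2)) by (apply Rsqr_pos_lt; auto). lra.
Qed.


Definition pfilt (z z' : R*R) : bool := if Req_EM_T (fst z) (fst z') then
    if Req_EM_T (snd z) (snd z') then false else true else true.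

Lemma pfilt_false z z' : pfilt z z' = false <-> z = z'.
Proof.
  unfold pfilt. destruct z as [a b], z' as [a' b']; simpl.
  destruct (Req_EM_T a a'); destruct (Req_EM_T b b'); split; intros H; try congruence; subst; auto;
  inversion H; congruence.
Qed.

Lemma filter_notin z l : ~ In z l -> filter (pfilt z) l = l.
Proof.
  induction l as [|a l IH]; intros H; simpl; auto.
  destruct (pfilt z a) eqn:E.
  - rewrite IH; auto. intros Hi; apply H; right; auto.
  - apply pfilt_false in E. subst. exfalso; apply H; left; auto.
Qed.

Lemma filter_drop (f : R*R -> R) z l : NoDup l -> In z l ->
  sumL f (filter (pfilt z) l) = sumL f l - f z /\ length (filter (pfilt z) l) = (length l - 1)%nat.
Proof.
  induction l as [|a l IH]; intros Hn Hi; [destruct Hi|].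
  inversion Hn; subst. simpl.
  destruct (pfilt z a) eqn:E.
  - destruct Hi as [Ea|Hi].
    + subst a. assert (pfilt z z = false) by (apply pfilt_false; auto). congruence.
    + destruct (IH H2 Hi) as [E1 E2]. rewrite sumL_cons, E1. simpl. rewrite E2.
      split; [lra|]. destruct l; [destruct Hi|]. simpl. lia.
  - apply pfilt_false in E. subst. rewrite filter_notin by auto. split; [lra| lia].
Qed.

Lemma ln_1p_le t : 0 <= t -> ln (1+t) <= t.
Proof.
  intros Ht. destruct (Rle_lt_dec (ln (1+t)) t) as [|H]; auto.
  apply exp_increasing in H. rewrite exp_ln in H by lra. pose proof (exp_ineq1_le t). lra.
Qed.

Lemma ln2_lt_1 : ln 2 < 1.
Proof.
  rewrite <- (ln_exp 1). apply ln_increasing; [lra|].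
  pose proof (exp_ineq1 1 ltac:(lra)). lra.
Qed.

Section Final.
Variable al : R.
Hypothesis Hal : -1 <= al <= 1.

Lemma pt_compare s z z' : 0 <= s < 1 -> in_strip z -> in_strip z' -> z <> z' ->
  Hp al s z z' + ln ((1+s)/2) <= Wpt al z z'.
Proof.
  intros Hs Hz Hz' Hne.
  assert (Hrc : exp (- Rabs (dx z z')) < 1 \/ cos (dy z z') < 1).
  { destruct (Req_dec (dx z z') 0) as [E|E].
    - right. apply cos_lt_1.
      + unfold in_strip, dy in *. pose proof PI_RGT_0. lra.
      + intros E2. apply Hne. unfold dx, dy in *. destruct z, z'; simpl in *. f_equal; lra.
    - left. rewrite <- exp_0. apply exp_increasing. pose proof (Rabs_pos_lt _ E). lra. }
  pose proof (COS_bound (dy z z')) as Hc.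
  unfold Wpt. fold (dx z z') (dy z z').
  rewrite W_eq.
  - unfold Hp, rr. apply compare; auto. apply Rabs_pos.
  - pose proof (rr_bounds z z') as Hb. unfold rr in Hb. apply Dq_pos2; auto; lra.
Qed.

Lemma Hp_diag s z : 0 <= s < 1 -> Hp al s z z = - ln (1 - s).
Proof.
  intros Hs. unfold Hp, rr, dx, dy, hq, Dq. rewrite !Rminus_diag, Rabs_R0, Ropp_0, exp_0, cos_0.
  replace (1 - 2 * s * 1 * 1 + s ^ 2 * 1 ^ 2) with ((1-s)*(1-s)) by ring.
  rewrite ln_mult by lra. field. lra.
Qed.

Lemma main_bound (w : list (R*R)) s : 0 <= s < 1 -> NoDup w -> (forall z, In z w -> in_strip z) ->
  INR (length w) * ln (1-s) + INR (length w) * (INR (length w) - 1) * ln ((1+s)/2) <= pair_sum al w.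
Proof.
  intros Hs Hn Hst.
  set (N := length w).
  assert (E : pair_sum al w = sumL (fun z => sumL (fun z' => Wpt al z z') (filter (pfilt z) w)) w).
  { unfold pair_sum. rewrite sumL_map. apply sumL_ext. intros z _. rewrite sumL_map. reflexivity. }
  rewrite E.
  assert (Hle : sumL (fun z => sumL (fun z' => Hp al s z z') w + ln (1-s) + (INR N - 1) * ln ((1+s)/2)) w
     <= sumL (fun z => sumL (fun z' => Wpt al z z') (filter (pfilt z) w)) w).
  { apply sumL_le. intros z Hz.
    destruct (filter_drop (fun z' => Hp al s z z') z w Hn Hz) as [E1 E2].
    eapply Rle_trans; [|apply (sumL_le (fun z' => Hp al s z z' + ln ((1+s)/2)))].
    - rewrite (sumL_plus (fun z' => Hp al s z z') (fun _ => ln ((1+s)/2))), sumL_const, E1, E2, Hp_diag by auto.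
      unfold N. destruct (length w) eqn:L. destruct w; [destruct Hz| discriminate].
      rewrite minus_INR by lia. simpl (INR 1). lra.
    - intros z' Hz'. apply filter_In in Hz'. destruct Hz' as [Hz'1 Hz'2].
      apply pt_compare; auto. intros Heq. subst. 
      assert (pfilt z' z' = false) by (apply pfilt_false; auto). congruence. }
  eapply Rle_trans; [|exact Hle].
  rewrite sumL_plus, sumL_plus, !sumL_const. fold N.
  pose proof (G_nonneg al Hal w s Hs). lra.
Qed.
End Final.

Theorem proposition2 (alpha : R) (N : nat) (w : list (R * R)) :
  -1 <= alpha <= 1 ->
  (1 <= N)%nat ->
  NoDup w -> length w = N ->
  (forall z, In z w -> in_strip z) ->
  pair_sum alpha w >= - INR N * (ln (INR N) + (1 - ln 2)).
Proof.
  intros Hal HN Hn HL Hst.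
  destruct (Nat.eq_dec N 1) as [E1|E1].
  - pose proof (main_bound alpha Hal w 0 ltac:(lra) Hn Hst) as H.
    rewrite HL, E1 in H. rewrite E1. simpl INR in *. rewrite Rminus_0_r, ln_1 in *. pose proof ln2_lt_1. lra.
  - assert (HN2 : 2 <= INR N) by (replace 2 with (INR 2) by (simpl; lra); apply le_INR; lia).
    set (n := INR N) in *.
    set (s := 1 - 2/n).
    assert (Hs : 0 <= s < 1).
    { unfold s.
      assert (2/n <= 1) by (unfold Rdiv; apply (Rmult_le_reg_r n); [lra|]; rewrite Rmult_assoc, Rinv_l by lra; lra).
      assert (0 < 2/n) by (apply Rdiv_lt_0_compat; lra). lra. }
    pose proof (main_bound alpha Hal w s Hs Hn Hst) as H. rewrite HL in H. fold n in H.
    assert (E1' : 1 - s = 2/n) by (unfold s; ring).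
    assert (E2' : (1+s)/2 = / (1 + 1/(n-1))) by (unfold s; field; lra).
    rewrite E1', E2' in H.
    unfold Rdiv in H at 1. rewrite ln_mult, ln_Rinv in H by (try apply Rinv_0_lt_compat; lra).
    rewrite ln_Rinv in H by (assert (0 < 1/(n-1)) by (apply Rdiv_lt_0_compat; lra); lra).
    pose proof (ln_1p_le (1/(n-1)) ltac:(left; apply Rdiv_lt_0_compat; lra)) as Hl.
    assert (Hk : n * (n-1) * (- ln (1 + 1/(n-1))) >= - n).
    { assert (n*(n-1) * ln (1 + 1/(n-1)) <= n*(n-1)*(1/(n-1))) by (apply Rmult_le_compat_l; nra).
      replace (n*(n-1)*(1/(n-1))) with n in H0 by (field; lra). lra. }
    lra.
Qed.
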